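(* For all integers $n\geq0$, \[ \sum_{j=0}^n\binom{2j}{j}\binom{2(n-j)}{n-j}O_jO_{n-j}=4^{n-1}\sum_{j=1}^n\frac{H_{n-j}}{j}. \]
   Context: $H_n=\sum_{j=1}^n\frac1j$ ($H_0=0$) and $O_n=\sum_{j=1}^n\frac1{2j-1}$ ($O_0=0$). An empty sum is $0$. *)

(* Defs.v *)
From mathcomp Require Import all_boot all_order all_algebra.
Set Implicit Arguments. Unset Strict Implicit. Unset Printing Implicit Defensive.
Import Order.TTheory GRing.Theory Num.Theory.
Local Open Scope ring_scope.

Definition H (n : nat) : rat := \sum_(1 <= j < n.+1) (j%:R)^-1.

Definition O (n : nat) : rat := \sum_(1 <= j < n.+1) ((2 * j - 1)%N%:R)^-1.

(* Main.v *)
Require Import Defs.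
From mathcomp Require Import all_boot all_order all_algebra.
Import Order.TTheory GRing.Theory Num.Theory.
Local Open Scope ring_scope.
From mathcomp Require Import zify ring lra.

Lemma binrec j : (j.+1 * 'C(2 * j.+1, j.+1) = 2 * (2 * j).+1 * 'C(2 * j, j))%N.
Proof.
have h1 := mul_bin_diag (2 * j.+1) j.
have h2 := mul_bin_down (2 * j).+1 j.
have e1 : (2 * j.+1).-1 = (2*j).+1 by rewrite mulnS.
rewrite e1 in h1; rewrite /= in h2.
have e2 : ((2 * j).+1 - j = j.+1)%N by lia.
rewrite e2 in h2.
apply/eqP; rewrite -(eqn_pmul2l (ltn0Sn j)); apply/eqP.
rewrite -h1 mulnCA -h2. lia.
Qed.

Definition b (j : nat) : rat := 'C(2 * j, j)%:R.

Lemma brec j : j.+1%:R * b j.+1 = 2 * (2 * j%:R + 1) * b j.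
Proof.
rewrite /b -natrM binrec -[(2 * j).+1]addn1 !(natrM, natrD); ring.
Qed.

Lemma sum_rev k (F : nat -> rat) :
  \sum_(i < k.+1) F i = \sum_(i < k.+1) F (k - i)%N.
Proof.
rewrite (reindex_inj rev_ord_inj) /=; apply: eq_bigr => i _.
by rewrite subSS.
Qed.

Lemma sum_i_rev k (G : nat -> rat) :
  \sum_(i < k.+1) i%:R * (G i * G (k - i)%N)
  = \sum_(i < k.+1) (k - i)%N%:R * (G i * G (k - i)%N).
Proof.
rewrite (sum_rev k (fun i => i%:R * (G i * G (k - i)%N))); apply: eq_bigr => i _.
rewrite subKn ?(leq_ord i) //; ring.
Qed.

Lemma sum_sym k (G : nat -> rat) :
  2 * \sum_(i < k.+1) i%:R * (G i * G (k - i)%N)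
  = k%:R * \sum_(i < k.+1) (G i * G (k - i)%N).
Proof.
have E := sum_i_rev k G.
transitivity (\sum_(i < k.+1) i%:R * (G i * G (k - i)%N) +
  \sum_(i < k.+1) (k - i)%N%:R * (G i * G (k - i)%N)); first by rewrite -E; ring.
rewrite -big_split big_distrr /=.
apply: eq_bigr => i _; rewrite -mulrDl -natrD subnKC ?(leq_ord i) //.
Qed.

Lemma bconv m : \sum_(i < m.+1) b i * b (m - i)%N = 4 ^+ m.
Proof.
elim: m => [|m IH]; first by rewrite big_ord1 /b /= bin0 expr0 mulr1.
have H1 : m.+1%:R * \sum_(i < m.+2) b i * b (m.+1 - i)%N
   = 2 * \sum_(i < m.+2) i%:R * (b i * b (m.+1 - i)%N).
  by rewrite sum_sym.
have H2 : \sum_(i < m.+2) i%:R * (b i * b (m.+1 - i)%N)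
   = \sum_(i < m.+1) 2 * (2 * i%:R + 1) * (b i * b (m - i)%N).
  rewrite big_ord_recl /= mul0r add0r; apply: eq_bigr => i _.
  rewrite /bump /= add1n subSS mulrA brec; ring.
have H3 : \sum_(i < m.+1) 2 * (2 * i%:R + 1) * (b i * b (m - i)%N)
   = 4 * \sum_(i < m.+1) i%:R * (b i * b (m - i)%N)
          + 2 * \sum_(i < m.+1) (b i * b (m - i)%N).
  rewrite !big_distrr -big_split /=.
  apply: eq_bigr => i _; ring.
have H4 := sum_sym m b.
have E4 : 4 * \sum_(i < m.+1) i%:R * (b i * b (m - i)%N) = 2 * (2 * \sum_(i < m.+1) i%:R * (b i * b (m - i)%N)) by ring.
rewrite E4 in H3.
rewrite H4 IH in H3.
rewrite H2 H3 in H1.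
apply: (mulfI (x := m.+1%:R)); first by rewrite pnatr_eq0.
rewrite H1 exprS; ring.
Qed.

Definition l (k : nat) : rat := 4 ^+ k / k%:R.

Lemma l0 : l 0 = 0.
Proof. by rewrite /l invr0 mulr0. Qed.

Lemma lS k : k.+1%:R * l k.+1 = 4 ^+ k.+1.
Proof. by rewrite /l mulrC divfK // pnatr_eq0. Qed.

Definition c (i : nat) : rat := \sum_(j < i.+1) b j * l (i - j)%N.

Lemma crec i : i.+1%:R * c i.+1 = (4 * i%:R + 2) * c i + 4 * b i.
Proof.
rewrite /c.
have E1 : i.+1%:R * \sum_(j < i.+2) b j * l (i.+1 - j)%N =
  \sum_(j < i.+2) j%:R * b j * l (i.+1 - j)%N +
  \sum_(j < i.+2) (i.+1 - j)%N%:R * l (i.+1 - j)%N * b j.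
  rewrite big_distrr -big_split /=; apply: eq_bigr => j _.
  rewrite -[X in X%:R * _](subnKC (leq_ord j)) natrD; ring.
have E2 : \sum_(j < i.+2) j%:R * b j * l (i.+1 - j)%N =
   \sum_(j < i.+1) 2 * (2 * j%:R + 1) * b j * l (i - j)%N.
  rewrite big_ord_recl /= mul0r add0r; apply: eq_bigr => j _.
  by rewrite /bump /= add1n subSS brec.
have E3 : \sum_(j < i.+2) (i.+1 - j)%N%:R * l (i.+1 - j)%N * b j =
   \sum_(j < i.+1) 4 ^+ (i - j).+1 * b j.
  rewrite big_ord_recr /= subnn mulr0n !mul0r addr0; apply: eq_bigr => j _.
  by rewrite /= subSn ?(leq_ord j) // lS.
rewrite E1 E2 E3 -big_split /= big_ord_recr /= [in RHS]big_ord_recr /=.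
rewrite subnn l0 expr1 !mulr0 !add0r.
rewrite mulrDr big_distrr /= -addrA; congr (_ + _); last by ring.
apply: eq_bigr => j _ /=.
have hj : (j < i)%N := ltn_ord j.
set k := (i - j)%N.
have ek : i%:R = j%:R + k%:R :> rat by rewrite -natrD subnKC // ltnW.
have kpos : (0 < k)%N by rewrite subn_gt0.
rewrite ek /l exprS.
have kn0 : k%:R != 0 :> rat by rewrite pnatr_eq0 -lt0n.
by field.
Qed.

Lemma OS i : O i.+1 = O i + (2 * i%:R + 1)^-1.
Proof.
rewrite /O big_nat_recr //=; congr (_ + (_)^-1).
by rewrite mulnS add2n /= subSS subn0 -addn1 natrD natrM.
Qed.

Lemma cE i : c i = 2 * b i * O i.
Proof.
elim: i => [|i IH]; first by rewrite /c big_ord1 l0 /O big_geq // !mulr0.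
apply: (mulfI (x := i.+1%:R)); first by rewrite pnatr_eq0.
rewrite crec IH OS.
have -> : i.+1%:R * (2 * b i.+1 * (O i + (2 * i%:R + 1)^-1))
  = 2 * (i.+1%:R * b i.+1) * (O i + (2 * i%:R + 1)^-1) by ring.
rewrite brec.
have h : 2 * i%:R + 1 != 0 :> rat.
  have h0 : 0 <= i%:R :> rat := ler0n _ i.
  have : 0 < 2 * i%:R + 1 :> rat by lra.
  by move=> hh; rewrite eq_sym lt_eqF.
by field.
Qed.

Lemma agreeM n (p p' q q' : {poly rat}) :
  (forall i, (i <= n)%N -> p`_i = p'`_i) ->
  (forall i, (i <= n)%N -> q`_i = q'`_i) ->
  forall i, (i <= n)%N -> (p * q)`_i = (p' * q')`_i.
Proof.
move=> hp hq i hi; rewrite !coefM; apply: eq_bigr => j _.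
have hj : (j <= n)%N by apply: leq_trans hi; rewrite -ltnS.
rewrite hp // hq //; apply: leq_trans hi; exact: leq_subr.
Qed.

Theorem corollary4 (n : nat) :
  \sum_(0 <= j < n.+1)
      ('C(2 * j, j)%:R * 'C(2 * (n - j), n - j)%:R * O j * O (n - j) : rat)
  = (4 : rat) ^ (n%:Z - 1) * \sum_(1 <= j < n.+1) H (n - j) / j%:R.
Proof.
set PA := \poly_(i < n.+1) (b i * O i).
set PB := \poly_(i < n.+1) b i.
set PL := \poly_(i < n.+1) l i.
set PG := \poly_(i < n.+1) (4 ^+ i : rat).
set Lp := \poly_(i < n.+1) (i%:R^-1 : rat).
set One := \poly_(i < n.+1) (1 : rat).
have S1 : \sum_(0 <= j < n.+1)
      ('C(2 * j, j)%:R * 'C(2 * (n - j), n - j)%:R * O j * O (n - j) : rat)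
   = (PA * PA)`_n.
  rewrite coefM big_mkord; apply: eq_bigr => j _.
  rewrite !coef_poly ltn_ord ltnS leq_subr /b; ring.
have S2 : (PA * PA)`_n = (((2^-1)%:P * (PB * PL)) * ((2^-1)%:P * (PB * PL)))`_n.
  have h : forall i, (i <= n)%N -> PA`_i = ((2^-1)%:P * (PB * PL))`_i.
    move=> i hi; rewrite coefCM coefM coef_poly ltnS hi.
    have -> : \sum_(j < i.+1) PB`_j * PL`_(i - j) = c i.
      apply: eq_bigr => j _; rewrite !coef_poly.
      have hj : (j < n.+1)%N by rewrite ltnS; apply: leq_trans hi; rewrite -ltnS.
      have hij : (i - j < n.+1)%N by rewrite ltnS; apply: leq_trans hi; exact: leq_subr.
      by rewrite hj hij.
    by rewrite cE !mulrA mulVf // mul1r.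
  exact: (agreeM _ _ _ _ _ h h n (leqnn n)).
have S3 : ((2^-1)%:P * (PB * PL)) * ((2^-1)%:P * (PB * PL))
   = (2^-1 * 2^-1)%:P * ((PB * PB) * (PL * PL)) by rewrite polyCM; ring.
have S4 : ((PB * PB) * (PL * PL))`_n = (PG * (PL * PL))`_n.
  apply: (agreeM n _ _ _ _ _ _ n (leqnn n)) => // i hi; rewrite coefM coef_poly ltnS hi -(bconv i).
  apply: eq_bigr => j _; rewrite !coef_poly.
  have hj : (j < n.+1)%N by rewrite ltnS; apply: leq_trans hi; rewrite -ltnS.
  have hij : (i - j < n.+1)%N by rewrite ltnS; apply: leq_trans hi; exact: leq_subr.
  by rewrite hj hij.
have S5 : (PG * (PL * PL))`_n = 4 ^+ n * (One * (Lp * Lp))`_n.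
  rewrite !coefM big_distrr; apply: eq_bigr => j _ /=.
  rewrite !coef_poly ltn_ord mul1r !coefM !big_distrr /=; apply: eq_bigr => k _.
  have hk : (n - j < n.+1)%N by rewrite ltnS leq_subr.
  have hk2 : (k < n.+1)%N by rewrite ltnS; apply: leq_trans (leq_subr j n); rewrite -ltnS.
  have hk3 : (n - j - k < n.+1)%N by rewrite ltnS; apply: leq_trans (leq_subr _ _) (leq_subr _ _).
  rewrite !coef_poly hk2 hk3 /l.
  have e : (4 : rat) ^+ n = 4 ^+ j * (4 ^+ k * 4 ^+ (n - j - k)).
    rewrite -!exprD subnKC; last by rewrite -ltnS.
    by rewrite subnKC // -ltnS ltn_ord.
  rewrite e; ring.
have S6 : \sum_(1 <= j < n.+1) H (n - j) / j%:R = (Lp * (Lp * One))`_n.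
  rewrite coefM big_add1 /= big_mkord big_ord_recl /= coef_poly /= invr0 mul0r add0r.
  apply: eq_bigr => j _; rewrite /bump /= add1n.
  rewrite coef_poly ltnS ltn_ord coefM /H big_add1 /= big_mkord big_ord_recl /= [Lp`_0]coef_poly /= invr0 mul0r add0r.
  rewrite mulrC; congr (_ * _); apply: eq_bigr => k _.
  rewrite !coef_poly.
  have hk : (k.+1 < n.+1)%N.
    have := ltn_ord k; lia.
  have hk2 : (n - j.+1 - bump 0 k < n.+1)%N by rewrite ltnS; apply: leq_trans (leq_subr _ _) (leq_subr _ _).
  by rewrite /bump /= add1n hk hk2 mulr1.
rewrite S1 S2 S3 coefCM S4 S5 S6.
have -> : One * (Lp * Lp) = Lp * (Lp * One) by ring.
rewrite expfzDr // exprnP.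
have -> : (4:rat) ^ (-1) = 4^-1 by [].
have e4 : (4:rat) = 2 * 2 by [].
by rewrite e4; field.
Qed.
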